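(* Let $(G,K)=(G_2,SU(3))$. For $X,Y\in\mathfrak g$, both $[\phi(X),\phi(Y)]=0$ and $[X_{\mathfrak k},Y_{\mathfrak k}]=0$ hold if and only if both $[X,Y]=0$ and $[X_{\mathfrak p},Y_{\mathfrak p}]=0$ hold.
   Context: $G_2=\operatorname{Aut}(\mathbb{O})\subseteq SO(7)$ is the automorphism group of the octonions acting on $\operatorname{Im}\mathbb{O}$, and $K=\{g\in G_2: g(i)=i\}\cong SU(3)$ for a fixed unit imaginary octonion $i$. Let $\mathfrak g$, $\mathfrak k$ be their Lie algebras, $\langle X,Y\rangle_0=-\operatorname{tr}(XY)$, $\mathfrak p$ the $\langle\cdot,\cdot\rangle_0$-orthogonal complement of $\mathfrak k$ in $\mathfrak g$, and $X=X_{\mathfrak k}+X_{\mathfrak p}$. Fix $t>0$ and set $\phi(Y)=\frac{t}{t+1}Y_{\mathfrak k}+Y_{\mathfrak p}$. *)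

(* Defs.v *)
From HB Require Import structures.
From mathcomp Require Import all_boot all_order all_algebra.
Set Implicit Arguments. Unset Strict Implicit. Unset Printing Implicit Defensive.
Import Order.TTheory GRing.Theory Num.Theory.
Local Open Scope ring_scope.

(* Imaginary octonions Im O = R^7 with basis e_1..e_7 indexed by 'I_7
   (index m stands for e_{m+1}).  Multiplication convention (Fano plane):
   e_a e_{a+1} = e_{a+3} (indices mod 7), i.e. the oriented triples are the
   cyclic shifts of (0,1,3).  octo_eps i j k is the structure constant
   e_i e_j = sum_k eps i j k e_k  for i <> j. *)
Definition octo_eps (R : nzRingType) (i j k : 'I_7) : R :=
  let d1 := ((j + 7 - i) %% 7)%N in
  let d2 := ((k + 7 - i) %% 7)%N in
  if ((d1, d2) \in [:: (1, 3); (2, 6); (4, 5)]%N) then 1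
  else if ((d1, d2) \in [:: (3, 1); (6, 2); (5, 4)]%N) then -1
  else 0.

Definition idot (R : nzRingType) (u v : 'cV[R]_7) : R := \sum_i u i 0 * v i 0.

Definition icross (R : nzRingType) (u v : 'cV[R]_7) : 'cV[R]_7 :=
  \col_k \sum_i \sum_j octo_eps R i j k * u i 0 * v j 0.

Definition octo (R : nzRingType) := (R * 'cV[R]_7)%type.

Definition oadd (R : nzRingType) (x y : octo R) : octo R := (x.1 + y.1, x.2 + y.2).

Definition omul (R : nzRingType) (x y : octo R) : octo R :=
  (x.1 * y.1 - idot x.2 y.2, x.1 *: y.2 + y.1 *: x.2 + icross x.2 y.2).

Definition is_derivation (R : nzRingType) (D : octo R -> octo R) : Prop :=
  forall x y, D (omul x y) = oadd (omul (D x) y) (omul x (D y)).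

(* g = Lie algebra of G_2 = Aut(O), realised on Im O: the X : Im O -> Im O
   whose extension by 0 on the real line is a derivation of O. *)
Definition in_g2 (R : nzRingType) (X : 'M[R]_7) : Prop :=
  is_derivation (fun x : octo R => (0, X *m x.2)).

(* k = Lie algebra of K = Stab_{G_2}(i). *)
Definition in_k (R : nzRingType) (i : 'cV[R]_7) (X : 'M[R]_7) : Prop :=
  in_g2 X /\ X *m i = 0.

Definition ip0 (R : nzRingType) (X Y : 'M[R]_7) : R := - \tr (X *m Y).

Definition in_p (R : nzRingType) (i : 'cV[R]_7) (X : 'M[R]_7) : Prop :=
  in_g2 X /\ forall Z, in_k i Z -> ip0 X Z = 0.

Definition kp_decomp (R : nzRingType) (i : 'cV[R]_7) (X Xk Xp : 'M[R]_7) : Prop :=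
  X = Xk + Xp /\ in_k i Xk /\ in_p i Xp.

Definition lie (R : nzRingType) (X Y : 'M[R]_7) : 'M[R]_7 := X *m Y - Y *m X.

Definition phi (R : fieldType) (t : R) (Yk Yp : 'M[R]_7) : 'M[R]_7 :=
  (t / (t + 1)) *: Yk + Yp.

(* Main.v *)
Require Import Defs.
From HB Require Import structures.
From mathcomp Require Import all_boot all_order all_algebra.
From mathcomp Require Import ring lra.
Import Order.TTheory GRing.Theory Num.Theory.
Local Open Scope ring_scope.

Definition epscn (i j k : nat) : nat :=
  let d1 := ((j + 7 - i) %% 7)%N in
  let d2 := ((k + 7 - i) %% 7)%N in
  if ((d1, d2) \in [:: (1, 3); (2, 6); (4, 5)]%N) then 1%N
  else if ((d1, d2) \in [:: (3, 1); (6, 2); (5, 4)]%N) then 2%N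
  else 0%N.

Section S.
Variable R : fieldType.
Definition epsR (n : nat) : R := match n with 1 => 1 | 2 => -1 | _ => 0 end.
Lemma epsc_ok (i j k : 'I_7) : octo_eps R i j k = epsR (epscn i j k).
Proof. by rewrite /octo_eps /epscn; case: ifP => //; case: ifP. Qed.

Definition cc (u : 'cV[R]_7) (n : nat) : R := u (inord n) 0.
Lemma ccv (u : 'cV[R]_7) (i : 'I_7) : u i 0 = cc u i.
Proof. by rewrite /cc inord_val. Qed.

Lemma sum7 (F : 'I_7 -> R) : \sum_i F i =
  F (inord 0) + F (inord 1) + F (inord 2) + F (inord 3) + F (inord 4) + F (inord 5) + F (inord 6).
Proof.
rewrite !big_ord_recr big_ord0 /= add0r.
by repeat congr (_ + _); congr F; apply: val_inj; rewrite /= inordK.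
Qed.

Lemma cr0 (u v : 'cV[R]_7) (k : 'I_7) : icross u v k 0 =
  \sum_(a < 7) \sum_(b < 7) epsR (epscn a b k) * cc u a * cc v b.
Proof.
rewrite /icross mxE; apply: eq_bigr => a _; apply: eq_bigr => b _.
by rewrite epsc_ok !ccv.
Qed.
End S.
Arguments cc {R}.
Arguments epsR {R}.

Ltac evaleps :=
  repeat match goal with |- context [epscn ?a ?b ?c] =>
    let v := eval vm_compute in (epscn a b c) in change (epscn a b c) with v end.

Arguments cc : simpl never.
Section T.
Variable R : fieldType.
Lemma cr_0 (u v : 'cV[R]_7) : cc (icross u v) 0 =
  cc u 1 * cc v 3 + cc u 2 * cc v 6 - cc u 3 * cc v 1 + cc u 4 * cc v 5 - cc u 5 * cc v 4 - cc u 6 * cc v 2.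
Proof. by rewrite {1}/cc cr0 !sum7 !inordK //; evaleps; rewrite /epsR; ring. Qed.

Lemma cr_1 (u v : 'cV[R]_7) : cc (icross u v) 1 =
  - cc u 0 * cc v 3 + cc u 2 * cc v 4 + cc u 3 * cc v 0 - cc u 4 * cc v 2 + cc u 5 * cc v 6 - cc u 6 * cc v 5.
Proof. by rewrite {1}/cc cr0 !sum7 !inordK //; evaleps; rewrite /epsR; ring. Qed.

Lemma cr_2 (u v : 'cV[R]_7) : cc (icross u v) 2 =
  - cc u 0 * cc v 6 - cc u 1 * cc v 4 + cc u 3 * cc v 5 + cc u 4 * cc v 1 - cc u 5 * cc v 3 + cc u 6 * cc v 0.
Proof. by rewrite {1}/cc cr0 !sum7 !inordK //; evaleps; rewrite /epsR; ring. Qed.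

Lemma cr_3 (u v : 'cV[R]_7) : cc (icross u v) 3 =
  cc u 0 * cc v 1 - cc u 1 * cc v 0 - cc u 2 * cc v 5 + cc u 4 * cc v 6 + cc u 5 * cc v 2 - cc u 6 * cc v 4.
Proof. by rewrite {1}/cc cr0 !sum7 !inordK //; evaleps; rewrite /epsR; ring. Qed.

Lemma cr_4 (u v : 'cV[R]_7) : cc (icross u v) 4 =
  - cc u 0 * cc v 5 + cc u 1 * cc v 2 - cc u 2 * cc v 1 - cc u 3 * cc v 6 + cc u 5 * cc v 0 + cc u 6 * cc v 3.
Proof. by rewrite {1}/cc cr0 !sum7 !inordK //; evaleps; rewrite /epsR; ring. Qed.

Lemma cr_5 (u v : 'cV[R]_7) : cc (icross u v) 5 =
  cc u 0 * cc v 4 - cc u 1 * cc v 6 + cc u 2 * cc v 3 - cc u 3 * cc v 2 - cc u 4 * cc v 0 + cc u 6 * cc v 1.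
Proof. by rewrite {1}/cc cr0 !sum7 !inordK //; evaleps; rewrite /epsR; ring. Qed.

Lemma cr_6 (u v : 'cV[R]_7) : cc (icross u v) 6 =
  cc u 0 * cc v 2 + cc u 1 * cc v 5 - cc u 2 * cc v 0 + cc u 3 * cc v 4 - cc u 4 * cc v 3 - cc u 5 * cc v 1.
Proof. by rewrite {1}/cc cr0 !sum7 !inordK //; evaleps; rewrite /epsR; ring. Qed.

Definition crE := (cr_0, cr_1, cr_2, cr_3, cr_4, cr_5, cr_6).

Lemma ccD (u v : 'cV[R]_7) n : cc (u + v) n = cc u n + cc v n.
Proof. by rewrite /cc mxE. Qed.
Lemma ccN (u : 'cV[R]_7) n : cc (- u) n = - cc u n.
Proof. by rewrite /cc mxE. Qed.
Lemma ccB (u v : 'cV[R]_7) n : cc (u - v) n = cc u n - cc v n.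
Proof. by rewrite ccD ccN. Qed.
Lemma ccZ (a : R) (u : 'cV[R]_7) n : cc (a *: u) n = a * cc u n.
Proof. by rewrite /cc mxE. Qed.
Lemma cc0 n : cc (0 : 'cV[R]_7) n = 0.
Proof. by rewrite /cc mxE. Qed.

Definition mc (M : 'M[R]_7) (n m : nat) : R := M (inord n) (inord m).
Lemma mulc (M : 'M[R]_7) (u : 'cV[R]_7) n : cc (M *m u) n =
  mc M n 0 * cc u 0 + mc M n 1 * cc u 1 + mc M n 2 * cc u 2 + mc M n 3 * cc u 3 +
  mc M n 4 * cc u 4 + mc M n 5 * cc u 5 + mc M n 6 * cc u 6.
Proof. by rewrite {1}/cc mxE sum7. Qed.

Lemma dotE (u v : 'cV[R]_7) : idot u v =
  cc u 0 * cc v 0 + cc u 1 * cc v 1 + cc u 2 * cc v 2 + cc u 3 * cc v 3 +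
  cc u 4 * cc v 4 + cc u 5 * cc v 5 + cc u 6 * cc v 6.
Proof. by rewrite /idot sum7. Qed.

Lemma vecP (u v : 'cV[R]_7) : (forall n, (n < 7)%N -> cc u n = cc v n) -> u = v.
Proof.
move=> h; apply/matrixP => i j; rewrite [j]ord1.
by have := h i (ltn_ord i); rewrite /cc inord_val.
Qed.

Definition simpE := (ccD, ccB, ccN, ccZ, cc0, mulc, crE).
End T.
Arguments mc : simpl never.

Ltac vec_tac := apply: vecP; case=> [|[|[|[|[|[|[|?]]]]]]] ? //; rewrite !simpE; ring.

Section U.
Variable R : fieldType.
Implicit Types x y z w : 'cV[R]_7.
Lemma crC x y : icross x y = - icross y x.
Proof. vec_tac. Qed.
Lemma crxxy x y : icross x (icross x y) = idot x y *: x - idot x x *: y.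
Proof. rewrite !dotE; vec_tac. Qed.
Lemma crpol x y z : icross x (icross y z) + icross y (icross x z) =
   idot x z *: y + idot y z *: x - (2 * idot x y) *: z.
Proof. rewrite !dotE; vec_tac. Qed.
End U.


Record v7 (R : Type) := V7 { c0 : R; c1 : R; c2 : R; c3 : R; c4 : R; c5 : R; c6 : R }.
Arguments V7 {R}.
Section V.
Variable R : fieldType.
Definition tov (u : 'cV[R]_7) : v7 R := V7 (cc u 0) (cc u 1) (cc u 2) (cc u 3) (cc u 4) (cc u 5) (cc u 6).
Definition crv (u v : v7 R) : v7 R :=
  let: V7 u0 u1 u2 u3 u4 u5 u6 := u in
  let: V7 v0 v1 v2 v3 v4 v5 v6 := v in
  V7 (u1 * v3 + u2 * v6 - u3 * v1 + u4 * v5 - u5 * v4 - u6 * v2)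
     (- u0 * v3 + u2 * v4 + u3 * v0 - u4 * v2 + u5 * v6 - u6 * v5)
     (- u0 * v6 - u1 * v4 + u3 * v5 + u4 * v1 - u5 * v3 + u6 * v0)
     (u0 * v1 - u1 * v0 - u2 * v5 + u4 * v6 + u5 * v2 - u6 * v4)
     (- u0 * v5 + u1 * v2 - u2 * v1 - u3 * v6 + u5 * v0 + u6 * v3)
     (u0 * v4 - u1 * v6 + u2 * v3 - u3 * v2 - u4 * v0 + u6 * v1)
     (u0 * v2 + u1 * v5 - u2 * v0 + u3 * v4 - u4 * v3 - u5 * v1).
Definition addv (u v : v7 R) : v7 R :=
  let: V7 u0 u1 u2 u3 u4 u5 u6 := u in
  let: V7 v0 v1 v2 v3 v4 v5 v6 := v in
  V7 (u0 + v0) (u1 + v1) (u2 + v2) (u3 + v3) (u4 + v4) (u5 + v5) (u6 + v6).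
Definition scv (a : R) (u : v7 R) : v7 R :=
  let: V7 u0 u1 u2 u3 u4 u5 u6 := u in
  V7 (a * u0) (a * u1) (a * u2) (a * u3) (a * u4) (a * u5) (a * u6).
Definition dotv (u v : v7 R) : R :=
  let: V7 u0 u1 u2 u3 u4 u5 u6 := u in
  let: V7 v0 v1 v2 v3 v4 v5 v6 := v in
  u0 * v0 + u1 * v1 + u2 * v2 + u3 * v3 + u4 * v4 + u5 * v5 + u6 * v6.

Lemma tov_cr u v : tov (icross u v) = crv (tov u) (tov v).
Proof. by rewrite /tov !crE. Qed.
Lemma tov_add u v : tov (u + v) = addv (tov u) (tov v).
Proof. by rewrite /tov !ccD. Qed.
Lemma tov_sub u v : tov (u - v) = addv (tov u) (scv (-1) (tov v)).
Proof. by rewrite /tov !ccB /= !mulN1r. Qed.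
Lemma tov_opp u : tov (- u) = scv (-1) (tov u).
Proof. by rewrite /tov !ccN /= !mulN1r. Qed.
Lemma tov_scale a u : tov (a *: u) = scv a (tov u).
Proof. by rewrite /tov !ccZ. Qed.
Lemma tov_dot u v : idot u v = dotv (tov u) (tov v).
Proof. by rewrite dotE. Qed.
Lemma tov_inj u v : tov u = tov v -> u = v.
Proof.
case=> h0 h1 h2 h3 h4 h5 h6; apply: vecP.
by case=> [|[|[|[|[|[|[|?]]]]]]] ? //.
Qed.
End V.
Opaque icross.
Definition tovE := (tov_cr, tov_add, tov_sub, tov_opp, tov_scale).
Ltac v7_tac := apply: tov_inj; rewrite ?tovE;
  repeat match goal with |- context [tov ?u] => let t := fresh "t" in set t := tov u; destruct t end;
  rewrite /= ; congr V7; ring.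


Ltac s_tac := rewrite ?tov_dot ?tovE;
  repeat match goal with |- context [tov ?u] => let t := fresh "t" in set t := tov u; destruct t end;
  rewrite /=; ring.

Section W.
Variable R : fieldType.
Implicit Types x y z w i a b u v : 'cV[R]_7.
Lemma crDl x y z : icross (x + y) z = icross x z + icross y z. Proof. v7_tac. Qed.
Lemma crDr x y z : icross z (x + y) = icross z x + icross z y. Proof. v7_tac. Qed.
Lemma crBl x y z : icross (x - y) z = icross x z - icross y z. Proof. v7_tac. Qed.
Lemma crBr x y z : icross z (x - y) = icross z x - icross z y. Proof. v7_tac. Qed.
Lemma crZl (c : R) x z : icross (c *: x) z = c *: icross x z. Proof. v7_tac. Qed.
Lemma crZr (c : R) x z : icross z (c *: x) = c *: icross z x. Proof. v7_tac. Qed.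
Lemma crNr x z : icross z (- x) = - icross z x. Proof. v7_tac. Qed.
Lemma cr0r z : icross z 0 = 0.
Proof. by rewrite -(scale0r 0) crZr !scale0r. Qed.
Lemma crC' x y : icross x y = - icross y x. Proof. v7_tac. Qed.
Lemma dotC x y : idot x y = idot y x. Proof. s_tac. Qed.
Lemma dotDl x y z : idot (x + y) z = idot x z + idot y z. Proof. s_tac. Qed.
Lemma dotDr x y z : idot z (x + y) = idot z x + idot z y. Proof. s_tac. Qed.
Lemma dotBl x y z : idot (x - y) z = idot x z - idot y z. Proof. s_tac. Qed.
Lemma dotBr x y z : idot z (x - y) = idot z x - idot z y. Proof. s_tac. Qed.
Lemma dotZl (c : R) x z : idot (c *: x) z = c * idot x z. Proof. s_tac. Qed.
Lemma dotZr (c : R) x z : idot z (c *: x) = c * idot z x. Proof. s_tac. Qed.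
Lemma dotNl x z : idot (- x) z = - idot x z. Proof. s_tac. Qed.
Lemma dotNr x z : idot z (- x) = - idot z x. Proof. s_tac. Qed.
Lemma dot0r z : idot z 0 = 0. Proof. by rewrite -(scale0r 0) dotZr mul0r. Qed.
Lemma dot0l z : idot 0 z = 0. Proof. by rewrite dotC dot0r. Qed.
Lemma dot_swap x y z : idot (icross x y) z = idot x (icross y z). Proof. s_tac. Qed.
Lemma dot_crx x y : idot (icross x y) x = 0. Proof. s_tac. Qed.
Lemma normcr x y : idot (icross x y) (icross x y) = idot x x * idot y y - idot x y ^+ 2.
Proof. s_tac. Qed.

Definition F2 (i a y : 'cV[R]_7) := icross i (icross a y) - icross a (icross i y) + icross (icross i a) y.
Lemma F2der i a u v : F2 i a (icross u v) = icross (F2 i a u) v + icross u (F2 i a v).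
Proof. rewrite /F2. v7_tac. Qed.
Lemma F2skew i a u v : idot (F2 i a u) v = - idot u (F2 i a v).
Proof. rewrite /F2. s_tac. Qed.
Lemma F2ii i a : F2 i a i = (2 * idot i i) *: a - (2 * idot a i) *: i.
Proof. rewrite /F2 !tov_dot. v7_tac. Qed.
Lemma F2aa i a : F2 i a a = (2 * idot a i) *: a - (2 * idot a a) *: i.
Proof. rewrite /F2 !tov_dot. v7_tac. Qed.
Lemma F2ab i a b : F2 i a b = icross i (icross a b) - (2 * idot a b) *: i + idot a i *: b + idot b i *: a.
Proof. rewrite /F2 !tov_dot. v7_tac. Qed.
Lemma F2Z i (c : R) a y : F2 i (c *: a) y = c *: F2 i a y.
Proof. rewrite /F2. v7_tac. Qed.
Lemma F20 i y : F2 i 0 y = 0.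
Proof. by have := F2Z i 0 0 y; rewrite !scale0r. Qed.
Lemma big6 (i a b : 'cV[R]_7) : idot (icross i (icross (icross i (icross a b)) a)) b =
  idot i i * idot a a * idot b b - idot i i * idot a b ^+ 2 + 3 * idot a i * idot b i * idot a b
  - 2 * idot a i ^+ 2 * idot b b - idot b i ^+ 2 * idot a a - idot i (icross a b) ^+ 2.
Proof. s_tac. Qed.
End W.


Ltac modv_tac := apply: tov_inj; rewrite ?(tov_add, tov_sub, tov_opp, tov_scale);
  repeat match goal with |- context [tov ?u] => let t := fresh "t" in set t := tov u; destruct t end;
  rewrite /= ; congr V7; ring.

Arguments mc {R}.
Arguments F2 {R}.
Section M.
Variable R : rcfType.
Implicit Types x y z w i a b u v : 'cV[R]_7.
Implicit Types A B X Z U V : 'M[R]_7.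

Lemma idotE u v : idot u v = (u^T *m v) 0 0.
Proof. by rewrite /idot mxE; apply: eq_bigr => k _; rewrite mxE. Qed.

Lemma mul_delta X s r : (X *m (delta_mx s 0 : 'cV[R]_7)) r 0 = X r s.
Proof. by rewrite -colE mxE. Qed.

Lemma dot_delta u r : idot u (delta_mx r 0 : 'cV[R]_7) = u r 0.
Proof. by rewrite idotE -colE !mxE. Qed.

Lemma mxext A B : (forall y : 'cV[R]_7, A *m y = B *m y) -> A = B.
Proof.
move=> h; apply/matrixP => r s.
by have := congr1 (fun M : 'cV[R]_7 => M r 0) (h (delta_mx s 0 : 'cV[R]_7)); rewrite !mul_delta.
Qed.

Lemma skewP X : (forall u v, idot (X *m u) v = - idot u (X *m v)) -> X^T = - X.
Proof.
move=> h; apply/matrixP => r s; rewrite !mxE.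
have := h (delta_mx r 0 : 'cV[R]_7) (delta_mx s 0 : 'cV[R]_7).
by rewrite dot_delta dotC dot_delta !mul_delta => ->.
Qed.

Lemma skewE X : X^T = - X -> forall u v, idot (X *m u) v = - idot u (X *m v).
Proof.
move=> h u v; rewrite !idotE trmx_mul h mulmxN mulNmx mulmxA.
by rewrite mxE.
Qed.

Definition Der X := (forall u v, X *m icross u v = icross (X *m u) v + icross u (X *m v)) /\ X^T = - X.

Lemma g2_Der X : in_g2 X <-> Der X.
Proof.
split.
- move=> h; have H := fun u v => h (0, u) (0, v).
  split.
  + move=> u v; move: (H u v); rewrite /omul /oadd /=; case=> _.
    by rewrite !scale0r !add0r.
  + apply: skewP => u v; move: (H u v); rewrite /omul /oadd /=; case=> h1 _.
    move: h1; rewrite !mul0r !sub0r; lra.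
- move=> [h1 h2] [a u] [b v]; rewrite /omul /oadd /=.
  have h3 := @skewE X h2.
  congr pair.
  + rewrite h3 !mulr0 !mul0r; ring.
  + rewrite !mulmxDr -!scalemxAr h1 !scale0r !add0r !addr0.
    modv_tac.
Qed.

Lemma Der_add A B : Der A -> Der B -> Der (A + B).
Proof.
move=> [hA1 hA2] [hB1 hB2]; split.
- move=> u v; rewrite !mulmxDl hA1 hB1 crDl crDr; modv_tac.
- by rewrite linearD /= hA2 hB2 opprD.
Qed.

Lemma Der_scale (c : R) A : Der A -> Der (c *: A).
Proof.
move=> [hA1 hA2]; split.
- move=> u v; rewrite -!scalemxAl hA1 crZl crZr scalerDr //.
- by rewrite linearZ /= hA2 scalerN.
Qed.

Lemma Der_opp A : Der A -> Der (- A).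
Proof. by move=> h; rewrite -scaleN1r; apply: Der_scale. Qed.

Lemma Der_sub A B : Der A -> Der B -> Der (A - B).
Proof. by move=> hA hB; apply: Der_add => //; apply: Der_opp. Qed.

Lemma Der_lie A B : Der A -> Der B -> Der (lie A B).
Proof.
move=> [hA1 hA2] [hB1 hB2]; split.
- move=> u v; rewrite /lie !mulmxBl -!mulmxA hB1 hA1 !mulmxDr !hA1 !hB1 crBl crBr.
  modv_tac.
- by rewrite /lie linearB /= !trmx_mul hA2 hB2 !mulmxN !mulNmx !opprK opprB.
Qed.

Definition ev (n : nat) : 'cV[R]_7 := delta_mx (inord n) 0.
Lemma cc_ev n p : (n < 7)%N -> (p < 7)%N -> cc (ev p) n = if n == p then 1 else 0.
Proof.
move=> hn hp; rewrite /cc /ev mxE eqxx andbT.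
have -> : (inord n == inord p :> 'I_7) = (n == p) by rewrite -val_eqE /= !inordK.
by case: (n == p).
Qed.

Definition Lm x : 'M[R]_7 := \matrix_(r, s) icross x (delta_mx s 0 : 'cV[R]_7) r 0.
Lemma mcLm x n m : mc (Lm x) n m = cc (icross x (ev m)) n.
Proof. by rewrite /mc /cc mxE. Qed.

Lemma Lm_mul x y : Lm x *m y = icross x y.
Proof.
apply: vecP; case=> [|[|[|[|[|[|[|?]]]]]]] ? //;
  rewrite mulc !mcLm !crE !cc_ev //=; ring.
Qed.

Definition Em i a : 'M[R]_7 := (1/2 : R) *: (Lm i *m Lm a - Lm a *m Lm i + Lm (icross i a)).
Lemma Em_mul i a y : Em i a *m y = (1/2 : R) *: F2 i a y.
Proof. by rewrite /Em -scalemxAl !mulmxDl ?mulmxBl ?mulNmx -!mulmxA !Lm_mul. Qed.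

Lemma Der_Em i a : Der (Em i a).
Proof.
split.
- by move=> u v; rewrite !Em_mul F2der scalerDr -crZl -crZr.
- apply: skewP => u v; rewrite !Em_mul dotZl dotZr F2skew; ring.
Qed.

Lemma Em0 i : Em i 0 = 0.
Proof. by apply: mxext => y; rewrite Em_mul F20 mul0mx scaler0. Qed.

Lemma Em_i i a : idot i i = 1 -> idot a i = 0 -> Em i a *m i = a.
Proof.
move=> h1 h2; rewrite Em_mul F2ii h1 h2 mulr0 scale0r subr0 mulr1 scalerA.
by rewrite mul1r mulVf ?scale1r // pnatr_eq0.
Qed.
End M.


Arguments mc {R}.
Arguments F2 {R}.
Arguments tov {_} _.
Arguments crv {_} _ _.
Arguments addv {_} _ _.
Arguments scv {_} _ _.
Arguments dotv {_} _ _.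
Arguments Der {R} X.
Arguments Em {R} i a.
Arguments Lm {R} x.

Set Implicit Arguments.
Section N.
Variable R : rcfType.
Implicit Types x y z w i a b u v : 'cV[R]_7.
Implicit Types A B X Z U V : 'M[R]_7.

Definition mulv Z (x : v7 R) : v7 R :=
  let: V7 x0 x1 x2 x3 x4 x5 x6 := x in
  V7 (mc Z 0%N 0%N * x0 + mc Z 0%N 1%N * x1 + mc Z 0%N 2%N * x2 + mc Z 0%N 3%N * x3 + mc Z 0%N 4%N * x4 + mc Z 0%N 5%N * x5 + mc Z 0%N 6%N * x6)
     (mc Z 1%N 0%N * x0 + mc Z 1%N 1%N * x1 + mc Z 1%N 2%N * x2 + mc Z 1%N 3%N * x3 + mc Z 1%N 4%N * x4 + mc Z 1%N 5%N * x5 + mc Z 1%N 6%N * x6)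
     (mc Z 2%N 0%N * x0 + mc Z 2%N 1%N * x1 + mc Z 2%N 2%N * x2 + mc Z 2%N 3%N * x3 + mc Z 2%N 4%N * x4 + mc Z 2%N 5%N * x5 + mc Z 2%N 6%N * x6)
     (mc Z 3%N 0%N * x0 + mc Z 3%N 1%N * x1 + mc Z 3%N 2%N * x2 + mc Z 3%N 3%N * x3 + mc Z 3%N 4%N * x4 + mc Z 3%N 5%N * x5 + mc Z 3%N 6%N * x6)
     (mc Z 4%N 0%N * x0 + mc Z 4%N 1%N * x1 + mc Z 4%N 2%N * x2 + mc Z 4%N 3%N * x3 + mc Z 4%N 4%N * x4 + mc Z 4%N 5%N * x5 + mc Z 4%N 6%N * x6)
     (mc Z 5%N 0%N * x0 + mc Z 5%N 1%N * x1 + mc Z 5%N 2%N * x2 + mc Z 5%N 3%N * x3 + mc Z 5%N 4%N * x4 + mc Z 5%N 5%N * x5 + mc Z 5%N 6%N * x6)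
     (mc Z 6%N 0%N * x0 + mc Z 6%N 1%N * x1 + mc Z 6%N 2%N * x2 + mc Z 6%N 3%N * x3 + mc Z 6%N 4%N * x4 + mc Z 6%N 5%N * x5 + mc Z 6%N 6%N * x6).
Lemma tov_mul Z u : tov (Z *m u) = mulv Z (tov u).
Proof. by rewrite /tov !mulc. Qed.
Lemma tov_ev n : tov (ev R n) = V7 (cc (ev R n) 0) (cc (ev R n) 1) (cc (ev R n) 2) (cc (ev R n) 3)
   (cc (ev R n) 4) (cc (ev R n) 5) (cc (ev R n) 6).
Proof. by []. Qed.

Lemma Der_sk Z : Der Z -> forall r s, mc Z r s = - mc Z s r.
Proof.
move=> [_ h] r s; have := congr1 (fun M : 'M[R]_7 => M (inord s) (inord r)) h.
by rewrite !mxE /mc.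
Qed.
Lemma Der_dg Z : Der Z -> forall r, mc Z r r = 0.
Proof. move=> h r; have := Der_sk h r r; lra. Qed.

Lemma Der_rel Z : Der Z ->
  (mc Z 2%N 3%N = mc Z 1%N 6%N - mc Z 0%N 4%N /\ mc Z 3%N 4%N = - mc Z 0%N 2%N - mc Z 1%N 5%N /\
      mc Z 3%N 5%N = mc Z 0%N 6%N + mc Z 1%N 4%N /\ mc Z 3%N 6%N = mc Z 1%N 2%N - mc Z 0%N 5%N /\
      mc Z 4%N 6%N = mc Z 2%N 5%N - mc Z 0%N 1%N /\ mc Z 5%N 6%N = mc Z 0%N 3%N - mc Z 2%N 4%N /\
      mc Z 4%N 5%N = - mc Z 1%N 3%N - mc Z 2%N 6%N).
Proof.
move=> hZ; have sk := Der_sk hZ; have dg := Der_dg hZ.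
have [h1 _] := hZ.
have E := fun p q => congr1 tov (h1 (ev R p) (ev R q)).
move: (E 0%N 1%N) (E 0%N 2%N) (E 1%N 2%N).
rewrite !tov_mul !tovE !tov_mul !tov_ev !cc_ev //=.
case=> a0 a1 a2 a3 a4 a5 a6; case=> b0 b1 b2 b3 b4 b5 b6; case=> c0 c1 c2 c3 c4 c5 c6.
split.
  move: a2; clear -sk dg; have := sk 1%N 0%N; have := sk 2%N 0%N; have := sk 2%N 1%N; have := sk 3%N 0%N; have := sk 3%N 1%N; have := sk 3%N 2%N; have := sk 4%N 0%N; have := sk 4%N 1%N; have := sk 4%N 2%N; have := sk 4%N 3%N; have := sk 5%N 0%N; have := sk 5%N 1%N; have := sk 5%N 2%N; have := sk 5%N 3%N; have := sk 5%N 4%N; have := sk 6%N 0%N; have := sk 6%N 1%N; have := sk 6%N 2%N; have := sk 6%N 3%N; have := sk 6%N 4%N; have := sk 6%N 5%N; have := dg 0%N; have := dg 1%N; have := dg 2%N; have := dg 3%N; have := dg 4%N; have := dg 5%N; have := dg 6%N; lra.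
split.
  move: a4; clear -sk dg; have := sk 1%N 0%N; have := sk 2%N 0%N; have := sk 2%N 1%N; have := sk 3%N 0%N; have := sk 3%N 1%N; have := sk 3%N 2%N; have := sk 4%N 0%N; have := sk 4%N 1%N; have := sk 4%N 2%N; have := sk 4%N 3%N; have := sk 5%N 0%N; have := sk 5%N 1%N; have := sk 5%N 2%N; have := sk 5%N 3%N; have := sk 5%N 4%N; have := sk 6%N 0%N; have := sk 6%N 1%N; have := sk 6%N 2%N; have := sk 6%N 3%N; have := sk 6%N 4%N; have := sk 6%N 5%N; have := dg 0%N; have := dg 1%N; have := dg 2%N; have := dg 3%N; have := dg 4%N; have := dg 5%N; have := dg 6%N; lra.
split.
  move: a5; clear -sk dg; have := sk 1%N 0%N; have := sk 2%N 0%N; have := sk 2%N 1%N; have := sk 3%N 0%N; have := sk 3%N 1%N; have := sk 3%N 2%N; have := sk 4%N 0%N; have := sk 4%N 1%N; have := sk 4%N 2%N; have := sk 4%N 3%N; have := sk 5%N 0%N; have := sk 5%N 1%N; have := sk 5%N 2%N; have := sk 5%N 3%N; have := sk 5%N 4%N; have := sk 6%N 0%N; have := sk 6%N 1%N; have := sk 6%N 2%N; have := sk 6%N 3%N; have := sk 6%N 4%N; have := sk 6%N 5%N; have := dg 0%N; have := dg 1%N; have := dg 2%N; have := dg 3%N; have := dg 4%N; have := dg 5%N; have := dg 6%N; lra.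
split.
  move: a6; clear -sk dg; have := sk 1%N 0%N; have := sk 2%N 0%N; have := sk 2%N 1%N; have := sk 3%N 0%N; have := sk 3%N 1%N; have := sk 3%N 2%N; have := sk 4%N 0%N; have := sk 4%N 1%N; have := sk 4%N 2%N; have := sk 4%N 3%N; have := sk 5%N 0%N; have := sk 5%N 1%N; have := sk 5%N 2%N; have := sk 5%N 3%N; have := sk 5%N 4%N; have := sk 6%N 0%N; have := sk 6%N 1%N; have := sk 6%N 2%N; have := sk 6%N 3%N; have := sk 6%N 4%N; have := sk 6%N 5%N; have := dg 0%N; have := dg 1%N; have := dg 2%N; have := dg 3%N; have := dg 4%N; have := dg 5%N; have := dg 6%N; lra.
split.
  move: b4; clear -sk dg; have := sk 1%N 0%N; have := sk 2%N 0%N; have := sk 2%N 1%N; have := sk 3%N 0%N; have := sk 3%N 1%N; have := sk 3%N 2%N; have := sk 4%N 0%N; have := sk 4%N 1%N; have := sk 4%N 2%N; have := sk 4%N 3%N; have := sk 5%N 0%N; have := sk 5%N 1%N; have := sk 5%N 2%N; have := sk 5%N 3%N; have := sk 5%N 4%N; have := sk 6%N 0%N; have := sk 6%N 1%N; have := sk 6%N 2%N; have := sk 6%N 3%N; have := sk 6%N 4%N; have := sk 6%N 5%N; have := dg 0%N; have := dg 1%N; have := dg 2%N; have := dg 3%N; have := dg 4%N; have := dg 5%N; have := dg 6%N; lra.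
split.
  move: b5; clear -sk dg; have := sk 1%N 0%N; have := sk 2%N 0%N; have := sk 2%N 1%N; have := sk 3%N 0%N; have := sk 3%N 1%N; have := sk 3%N 2%N; have := sk 4%N 0%N; have := sk 4%N 1%N; have := sk 4%N 2%N; have := sk 4%N 3%N; have := sk 5%N 0%N; have := sk 5%N 1%N; have := sk 5%N 2%N; have := sk 5%N 3%N; have := sk 5%N 4%N; have := sk 6%N 0%N; have := sk 6%N 1%N; have := sk 6%N 2%N; have := sk 6%N 3%N; have := sk 6%N 4%N; have := sk 6%N 5%N; have := dg 0%N; have := dg 1%N; have := dg 2%N; have := dg 3%N; have := dg 4%N; have := dg 5%N; have := dg 6%N; lra.
  move: c5; clear -sk dg; have := sk 1%N 0%N; have := sk 2%N 0%N; have := sk 2%N 1%N; have := sk 3%N 0%N; have := sk 3%N 1%N; have := sk 3%N 2%N; have := sk 4%N 0%N; have := sk 4%N 1%N; have := sk 4%N 2%N; have := sk 4%N 3%N; have := sk 5%N 0%N; have := sk 5%N 1%N; have := sk 5%N 2%N; have := sk 5%N 3%N; have := sk 5%N 4%N; have := sk 6%N 0%N; have := sk 6%N 1%N; have := sk 6%N 2%N; have := sk 6%N 3%N; have := sk 6%N 4%N; have := sk 6%N 5%N; have := dg 0%N; have := dg 1%N; have := dg 2%N; have := dg 3%N; have := dg 4%N; have := dg 5%N; have := dg 6%N; lra.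
Qed.

End N.


Arguments mc {R}.
Arguments F2 {R}.
Arguments tov {_} _.
Arguments crv {_} _ _.
Arguments addv {_} _ _.
Arguments scv {_} _ _.
Arguments dotv {_} _ _.
Arguments Der {R} X.
Arguments Em {R} i a.
Arguments Lm {R} x.

Arguments c0 {R}.
Arguments c1 {R}.
Arguments c2 {R}.
Arguments c3 {R}.
Arguments c4 {R}.
Arguments c5 {R}.
Arguments c6 {R}.
Arguments mulv {R}.
Set Implicit Arguments.
Section N.
Variable R : rcfType.
Implicit Types x y z w i a b u v : 'cV[R]_7.
Implicit Types A B X Z U V : 'M[R]_7.
Lemma trE Z M : \tr (Z *m M) = cc (Z *m (M *m ev R 0)) 0 + cc (Z *m (M *m ev R 1)) 1 +
  cc (Z *m (M *m ev R 2)) 2 + cc (Z *m (M *m ev R 3)) 3 + cc (Z *m (M *m ev R 4)) 4 +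
  cc (Z *m (M *m ev R 5)) 5 + cc (Z *m (M *m ev R 6)) 6.
Proof. by rewrite /mxtrace sum7 /cc /ev !mulmxA !mul_delta. Qed.

Lemma cc0T w : cc w 0 = c0 (tov w). Proof. by []. Qed.
Lemma cc1T w : cc w 1 = c1 (tov w). Proof. by []. Qed.
Lemma cc2T w : cc w 2 = c2 (tov w). Proof. by []. Qed.
Lemma cc3T w : cc w 3 = c3 (tov w). Proof. by []. Qed.
Lemma cc4T w : cc w 4 = c4 (tov w). Proof. by []. Qed.
Lemma cc5T w : cc w 5 = c5 (tov w). Proof. by []. Qed.
Lemma cc6T w : cc w 6 = c6 (tov w). Proof. by []. Qed.

Lemma Em_tr i a Z : Der Z -> \tr (Em i a *m Z) = -3 * idot a (Z *m i).
Proof.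
move=> hZ; have sk := Der_sk hZ; have dg := Der_dg hZ.
have [r1 [r2 [r3 [r4 [r5 [r6 r7]]]]]] := Der_rel hZ.
rewrite mxtrace_mulC trE !Em_mul cc0T cc1T cc2T cc3T cc4T cc5T cc6T.
rewrite !tov_mul !tov_scale /F2 !tovE !tov_ev !cc_ev // tov_dot tov_mul.
move: (tov i) (tov a) => [i0 i1 i2 i3 i4 i5 i6] [a0 a1 a2 a3 a4 a5 a6] /=.
rewrite ?(sk 1%N 0%N) ?(sk 2%N 0%N) ?(sk 2%N 1%N) ?(sk 3%N 0%N) ?(sk 3%N 1%N) ?(sk 3%N 2%N) ?(sk 4%N 0%N) ?(sk 4%N 1%N) ?(sk 4%N 2%N) ?(sk 4%N 3%N) ?(sk 5%N 0%N) ?(sk 5%N 1%N) ?(sk 5%N 2%N) ?(sk 5%N 3%N) ?(sk 5%N 4%N) ?(sk 6%N 0%N) ?(sk 6%N 1%N) ?(sk 6%N 2%N) ?(sk 6%N 3%N) ?(sk 6%N 4%N) ?(sk 6%N 5%N) ?(dg 0%N) ?(dg 1%N) ?(dg 2%N) ?(dg 3%N) ?(dg 4%N) ?(dg 5%N) ?(dg 6%N).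
rewrite ?r1 ?r2 ?r3 ?r4 ?r5 ?r6 ?r7.
field.
all: done.
Qed.
End N.


Arguments mc {R}.
Arguments F2 {R}.
Arguments tov {_} _.
Arguments crv {_} _ _.
Arguments addv {_} _ _.
Arguments scv {_} _ _.
Arguments dotv {_} _ _.
Arguments Der {R} X.
Arguments Em {R} i a.
Arguments Lm {R} x.

Arguments c0 {R}.
Arguments c1 {R}.
Arguments c2 {R}.
Arguments c3 {R}.
Arguments c4 {R}.
Arguments c5 {R}.
Arguments c6 {R}.
Arguments mulv {R}.

Ltac modf_tac := apply: tov_inj; rewrite ?(tov_add, tov_sub, tov_opp, tov_scale);
  repeat match goal with |- context [tov ?u] => let t := fresh "t" in set t := tov u; destruct t end;
  rewrite /= ; congr V7; field; try done.

Set Implicit Arguments.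
Section K.
Variable R : rcfType.
Implicit Types x y z w i a b u v : 'cV[R]_7.
Implicit Types A B C D X Z U V : 'M[R]_7.

Lemma ip0D A B Z : ip0 (A + B) Z = ip0 A Z + ip0 B Z.
Proof. by rewrite /ip0 mulmxDl mxtraceD opprD. Qed.
Lemma ip0Z (c : R) A Z : ip0 (c *: A) Z = c * ip0 A Z.
Proof. by rewrite /ip0 -scalemxAl mxtraceZ mulrN. Qed.
Lemma ip0N A Z : ip0 (- A) Z = - ip0 A Z.
Proof. by rewrite -scaleN1r ip0Z mulN1r. Qed.

Lemma p_add i A B : in_p i A -> in_p i B -> in_p i (A + B).
Proof.
move=> [hA pA] [hB pB]; split.
- by apply/g2_Der; apply: Der_add; apply/g2_Der.
- by move=> Z hZ; rewrite ip0D pA // pB // addr0.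
Qed.
Lemma p_scale i (c : R) A : in_p i A -> in_p i (c *: A).
Proof.
move=> [hA pA]; split.
- by apply/g2_Der; apply: Der_scale; apply/g2_Der.
- by move=> Z hZ; rewrite ip0Z pA // mulr0.
Qed.
Lemma p_opp i A : in_p i A -> in_p i (- A).
Proof. by move=> h; rewrite -scaleN1r; apply: p_scale. Qed.

Lemma k_lie i Z1 Z2 : in_k i Z1 -> in_k i Z2 -> in_k i (lie Z1 Z2).
Proof.
move=> [h1 e1] [h2 e2]; split.
- by apply/g2_Der; apply: Der_lie; apply/g2_Der.
- by rewrite /lie mulmxBl -!mulmxA e1 e2 !mulmx0 subr0.
Qed.

Lemma kp_lie i Z U : in_k i Z -> in_p i U -> in_p i (lie Z U).
Proof.
move=> hk [hU pU]; split.
- have [hZ _] := hk; by apply/g2_Der; apply: Der_lie; apply/g2_Der.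
- move=> Z' hk'.
  have := pU _ (k_lie hk hk').
  rewrite /ip0 /lie => h.
  suff -> : \tr ((Z *m U - U *m Z) *m Z') = - \tr (U *m (Z *m Z' - Z' *m Z)) by rewrite opprK; apply/eqP; rewrite -oppr_eq0 h.
  rewrite mulmxBl mulmxBr !raddfB /= -!mulmxA [\tr (Z *m _)]mxtrace_mulC -mulmxA. by rewrite opprK addrC.
Qed.

Lemma pk_lie i U Z : in_p i U -> in_k i Z -> in_p i (lie U Z).
Proof.
move=> hU hZ; have -> : lie U Z = - lie Z U by rewrite /lie opprB.
by apply: p_opp; apply: kp_lie.
Qed.

Lemma sum_sq_le (F : 'I_7 -> R) r : (forall k, 0 <= F k) -> F r <= \sum_k F k.
Proof. by move=> h; rewrite (bigD1 r) //= lerDl sumr_ge0. Qed.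

Lemma kp0 i Z : in_k i Z -> in_p i Z -> Z = 0.
Proof.
move=> hk [_ hp]; have h0 := hp Z hk; have [hg _] := hk.
have [_ hT] : Der Z by apply/g2_Der.
move: h0; rewrite /ip0 => h0.
have hs : \sum_r \sum_s Z r s ^+ 2 = 0.
  have -> : \sum_r \sum_s Z r s ^+ 2 = \tr (Z *m Z^T).
    rewrite /mxtrace; apply: eq_bigr => r _; rewrite mxE; apply: eq_bigr => s _.
    by rewrite mxE expr2.
  by rewrite hT mulmxN raddfN /= h0.
apply/matrixP => r s; rewrite mxE.
have h1 : Z r s ^+ 2 <= 0.
  rewrite -hs; apply: le_trans (sum_sq_le (fun s => Z r s ^+ 2) s _) _ => [k|]; first exact: sqr_ge0.
  apply: (sum_sq_le (fun r => \sum_s Z r s ^+ 2)) => k; apply: sumr_ge0 => j _; exact: sqr_ge0.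
by apply/eqP; rewrite -sqrf_eq0 eq_le h1 sqr_ge0.
Qed.

Lemma dot_ge0 u : 0 <= idot u u.
Proof. by rewrite /idot; apply: sumr_ge0 => k _; rewrite -expr2 sqr_ge0. Qed.

Lemma dot_eq0 u : idot u u = 0 -> u = 0.
Proof.
move=> h; apply/matrixP => r c; rewrite [c]ord1 mxE.
have h1 : u r 0 ^+ 2 <= 0.
  rewrite -h /idot expr2; apply: (sum_sq_le (fun k => u k 0 * u k 0) r) => k.
  by rewrite -expr2 sqr_ge0.
by apply/eqP; rewrite -sqrf_eq0 eq_le h1 sqr_ge0.
Qed.

Lemma p_dot i U : in_p i U -> idot (U *m i) i = 0.
Proof.
case=> hg _; have [_ hT] : Der U by apply/g2_Der.
have := @skewE R U hT i i; rewrite (dotC _ i); lra.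
Qed.

Lemma Em_p i a : in_p i (Em i a).
Proof.
split; first by apply/g2_Der; exact: Der_Em.
move=> Z [hg hZi]; rewrite /ip0 Em_tr ?hZi ?dot0r ?mulr0 ?oppr0 //.
by apply/g2_Der.
Qed.

Lemma p_Em i U : idot i i = 1 -> in_p i U -> U = Em i (U *m i).
Proof.
move=> hii hU.
set a := U *m i.
have hai : idot a i = 0 := p_dot hU.
have hk : in_k i (U - Em i a).
  split; last by rewrite mulmxBl -/a Em_i // subrr.
  by apply/g2_Der; apply: Der_sub; [apply/g2_Der; case: hU | exact: Der_Em].
have hp : in_p i (U - Em i a) by apply: p_add => //; apply: p_opp; exact: Em_p.
by have /eqP := kp0 hk hp; rewrite subr_eq0 => /eqP.
Qed.

Lemma lie_bil (c : R) A B C D :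
  lie (c *: A + B) (c *: C + D) = (c * c) *: lie A C + c *: (lie A D + lie B C) + lie B D.
Proof.
rewrite /lie !mulmxDl !mulmxDr -!scalemxAl -!scalemxAr !scalerA.
move: (A *m C) (C *m A) (A *m D) (D *m A) (B *m C) (C *m B) (B *m D) (D *m B)
  => p1 p2 p3 p4 p5 p6 p7 p8.
by apply/matrixP => r s; rewrite !mxE; ring.
Qed.
End K.


Arguments mc {R}.
Arguments F2 {R}.
Arguments tov {_} _.
Arguments crv {_} _ _.
Arguments addv {_} _ _.
Arguments scv {_} _ _.
Arguments dotv {_} _ _.
Arguments Der {R} X.
Arguments Em {R} i a.
Arguments Lm {R} x.

Arguments c0 {R}.
Arguments c1 {R}.
Arguments c2 {R}.
Arguments c3 {R}.
Arguments c4 {R}.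
Arguments c5 {R}.
Arguments c6 {R}.
Arguments mulv {R}.




Set Implicit Arguments.
Section Key.
Variable R : rcfType.
Implicit Types x y z w i a b u v : 'cV[R]_7.
Implicit Types A B C D X Z U V : 'M[R]_7.

Lemma key i U V : idot i i = 1 -> in_p i U -> in_p i V -> in_p i (lie U V) -> lie U V = 0.
Proof.
move=> hii hU hV hW.
have [_ hUT] : Der U by apply/g2_Der; case: hU.
have [_ hVT] : Der V by apply/g2_Der; case: hV.
have sU := @skewE R U hUT; have sV := @skewE R V hVT.
have hWe := p_Em hii hW.
set a := U *m i; set b := V *m i.
have hUe : U = Em i a := p_Em hii hU.
have hVe : V = Em i b := p_Em hii hV.
have hai : idot a i = 0 := p_dot hU.
have hbi : idot b i = 0 := p_dot hV.
set n := icross i (icross a b).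
have hUb : U *m b = (1/2) *: n - idot a b *: i.
  rewrite {1}hUe Em_mul F2ab hai hbi !scale0r !addr0 -/n; modf_tac.
have hVa : V *m a = - ((1/2) *: n) - idot a b *: i.
  rewrite {1}hVe Em_mul F2ab hai hbi !scale0r !addr0 (dotC _ b a) (crC' _ b a) crNr -/n; modf_tac.
have hUa : U *m a = - (idot a a *: i).
  rewrite {1}hUe Em_mul F2aa hai mulr0 scale0r sub0r; modf_tac.
have hVb : V *m b = - (idot b b *: i).
  rewrite {1}hVe Em_mul F2aa hbi mulr0 scale0r sub0r; modf_tac.
have hc : lie U V *m i = n.
  rewrite /lie mulmxBl -!mulmxA -/a -/b hUb hVa; modf_tac.
rewrite hc in hWe.
have hni : idot n i = 0 by rewrite /n dot_crx.
have hnn : idot n n = idot i i * (idot a a * idot b b - idot a b ^+ 2) - idot i (icross a b) ^+ 2.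
  by rewrite /n !normcr.
have hWa : idot (lie U V *m a) b = (1/4) * idot n n - idot a b ^+ 2 * idot i i + idot a a * idot b b * idot i i.
  rewrite /lie mulmxBl dotBl -!mulmxA (sU (V *m a) b) (sV (U *m a) b) hVa hUb hUa hVb.
  rewrite !(dotBl, dotBr, dotDl, dotDr, dotZl, dotZr, dotNl, dotNr) (dotC _ i n) hni.
  field; try done.
have hEa : idot (Em i n *m a) b = (1/2) * (idot a a * idot b b - idot a b ^+ 2 - idot i (icross a b) ^+ 2).
  rewrite Em_mul dotZl F2ab !(dotBl, dotDl, dotZl) (dotC _ i b) hbi hni hai /n big6 hai hbi hii.
  field; try done.
have hX : idot (icross a b) (icross a b) = 0.
  have e := hWa; rewrite {1}hWe hEa hnn hii in e.
  have hge := @dot_ge0 R (icross a b); rewrite normcr in hge.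
  have hph := sqr_ge0 (idot i (icross a b)).
  rewrite normcr; lra.
have hn0 : n = 0 by rewrite /n (@dot_eq0 R _ hX) cr0r.
by rewrite hWe hn0 Em0.
Qed.
End Key.

Unset Implicit Arguments.
Theorem mainTheorem8 (R : rcfType) (t : R) (ht : 0 < t) (i : 'cV[R]_7)
  (hi : idot i i = 1)
  (X Y Xk Xp Yk Yp : 'M[R]_7)
  (hX : in_g2 X) (hY : in_g2 Y)
  (hXd : kp_decomp i X Xk Xp) (hYd : kp_decomp i Y Yk Yp) :
  (lie (phi t Xk Xp) (phi t Yk Yp) = 0 /\ lie Xk Yk = 0) <->
  (lie X Y = 0 /\ lie Xp Yp = 0).
Proof.
case: hXd => eX [hXk hXp]; case: hYd => eY [hYk hYp].
have hs : t / (t + 1) != 0.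
  have ht1 : 0 < t + 1 by lra.
  by rewrite mulf_neq0 ?invr_eq0 ?lt0r_neq0.
set s := t / (t + 1) in hs *.
have eP : lie (phi t Xk Xp) (phi t Yk Yp) =
   (s * s) *: lie Xk Yk + s *: (lie Xk Yp + lie Xp Yk) + lie Xp Yp by rewrite /phi -/s lie_bil.
have eL : lie X Y = lie Xk Yk + (lie Xk Yp + lie Xp Yk) + lie Xp Yp.
  by rewrite eX eY; have := @lie_bil R 1 Xk Xp Yk Yp; rewrite mulr1 !scale1r => ->.
have hM : in_p i (lie Xk Yp + lie Xp Yk) := p_add (kp_lie hXk hYp) (pk_lie hXp hYk).
rewrite eP eL; split.
- move=> [h1 h2]; rewrite h2 scaler0 add0r in h1.
  have hP : lie Xp Yp = - (s *: (lie Xk Yp + lie Xp Yk)).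
    by rewrite -[lie Xp Yp](addKr (s *: (lie Xk Yp + lie Xp Yk))) h1 addr0.
  have hP0 : lie Xp Yp = 0.
    by apply: key hi hXp hYp _; rewrite hP; apply: p_opp; apply: p_scale.
  rewrite hP0 addr0 in h1.
  move/eqP: h1; rewrite scaler_eq0 (negbTE hs) /= => /eqP hM0.
  by rewrite h2 hM0 hP0 !addr0.
- move=> [h1 h2]; rewrite h2 addr0 in h1.
  have hK : lie Xk Yk = - (lie Xk Yp + lie Xp Yk).
    by apply/eqP; rewrite -addr_eq0 h1.
  have hK0 : lie Xk Yk = 0.
    by apply: (kp0 (k_lie hXk hYk)); rewrite hK; apply: p_opp.
  rewrite hK0 add0r in h1.
  by rewrite hK0 h1 h2 !scaler0 !addr0.
Qed.
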